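(* Let $p\in\{2,3\}$, let $\mathbf{k}$ be a field of characteristic $p$, and let $K=\mathbf{k}[y_1,y_2,y_3]/(y_1^p,y_2^p,y_3^p)$. Let $\mathcal{L}=Lie_K(x_1,x_2,x_3\mid y_3x_3=y_2x_2+y_1x_1)$. Then $\mathcal{L}$ is not embeddable into its universal enveloping algebra $U_K(\mathcal{L})=K\langle x_1,x_2,x_3\mid y_3x_3=y_2x_2+y_1x_1\rangle$; i.e., the canonical map $\mathcal{L}\to U_K(\mathcal{L})$ is not injective.
   Context: $Lie_K(X\mid\cdot)$ denotes the free Lie $K$-algebra on $X$ modulo the ideal generated by the given relation; $U_K(\mathcal L)$ is the corresponding associative $K$-algebra with identity, and the canonical map is induced by $x_i\mapsto x_i$. *)

(* Defs.v *)
From HB Require Import structures.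
From mathcomp Require Import all_boot all_algebra.
From mathcomp Require Import mpoly.
Set Implicit Arguments. Unset Strict Implicit. Unset Printing Implicit Defensive.
Import GRing.Theory.
Local Open Scope ring_scope.

(* Scalars: the polynomial ring P = k[y1,y2,y3] = {mpoly k[3]}, with y_(i+1) = 'X_i.
   A module over K = P/(y1^p,y2^p,y3^p) is exactly a P-module annihilated by
   the ideal (y1^p,y2^p,y3^p); this is how K-scalars are encoded below. *)

Section Presentations.
Variable k : fieldType.
Variable p : nat.
Local Notation P := {mpoly k[3]}.
Local Notation y i := ('X_(i : 'I_3) : P).

Definition i0 : 'I_3 := @Ordinal 3 0 isT.
Definition i1 : 'I_3 := @Ordinal 3 1 isT.
Definition i2 : 'I_3 := @Ordinal 3 2 isT.

Inductive lterm : Type :=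
| LVar  of 'I_3
| LZero
| LAdd  of lterm & lterm
| LScal of P & lterm
| LBr   of lterm & lterm.

Inductive lie_eqv : lterm -> lterm -> Prop :=
| le_refl a : lie_eqv a a
| le_sym a b : lie_eqv a b -> lie_eqv b a
| le_trans a b c : lie_eqv a b -> lie_eqv b c -> lie_eqv a c
| le_add a a' b b' : lie_eqv a a' -> lie_eqv b b' -> lie_eqv (LAdd a b) (LAdd a' b')
| le_scal c a a' : lie_eqv a a' -> lie_eqv (LScal c a) (LScal c a')
| le_br a a' b b' : lie_eqv a a' -> lie_eqv b b' -> lie_eqv (LBr a b) (LBr a' b')
| le_addA a b c : lie_eqv (LAdd a (LAdd b c)) (LAdd (LAdd a b) c)
| le_addC a b : lie_eqv (LAdd a b) (LAdd b a)
| le_add0 a : lie_eqv (LAdd a LZero) a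
| le_scalDl c d a : lie_eqv (LScal (c + d) a) (LAdd (LScal c a) (LScal d a))
| le_scalDr c a b : lie_eqv (LScal c (LAdd a b)) (LAdd (LScal c a) (LScal c b))
| le_scalA c d a : lie_eqv (LScal (c * d) a) (LScal c (LScal d a))
| le_scal1 a : lie_eqv (LScal 1 a) a
| le_scal0 a : lie_eqv (LScal 0 a) LZero
| le_brDl a b c : lie_eqv (LBr (LAdd a b) c) (LAdd (LBr a c) (LBr b c))
| le_brDr a b c : lie_eqv (LBr a (LAdd b c)) (LAdd (LBr a b) (LBr a c))
| le_brZl c a b : lie_eqv (LBr (LScal c a) b) (LScal c (LBr a b))
| le_brZr c a b : lie_eqv (LBr a (LScal c b)) (LScal c (LBr a b))
| le_alt a : lie_eqv (LBr a a) LZero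
| le_jacobi a b c :
    lie_eqv (LAdd (LBr a (LBr b c)) (LAdd (LBr b (LBr c a)) (LBr c (LBr a b)))) LZero
| le_ann g i a : lie_eqv (LScal (g * y i ^+ p) a) LZero
| le_rel : lie_eqv (LScal (y i2) (LVar i2))
                   (LAdd (LScal (y i1) (LVar i1)) (LScal (y i0) (LVar i0))).

Inductive aterm : Type :=
| AVar  of 'I_3
| AZero
| AOne
| AAdd  of aterm & aterm
| AScal of P & aterm
| AMul  of aterm & aterm.

Inductive ass_eqv : aterm -> aterm -> Prop :=
| ae_refl a : ass_eqv a a
| ae_sym a b : ass_eqv a b -> ass_eqv b a
| ae_trans a b c : ass_eqv a b -> ass_eqv b c -> ass_eqv a c
| ae_add a a' b b' : ass_eqv a a' -> ass_eqv b b' -> ass_eqv (AAdd a b) (AAdd a' b')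
| ae_scal c a a' : ass_eqv a a' -> ass_eqv (AScal c a) (AScal c a')
| ae_mul a a' b b' : ass_eqv a a' -> ass_eqv b b' -> ass_eqv (AMul a b) (AMul a' b')
| ae_addA a b c : ass_eqv (AAdd a (AAdd b c)) (AAdd (AAdd a b) c)
| ae_addC a b : ass_eqv (AAdd a b) (AAdd b a)
| ae_add0 a : ass_eqv (AAdd a AZero) a
| ae_scalDl c d a : ass_eqv (AScal (c + d) a) (AAdd (AScal c a) (AScal d a))
| ae_scalDr c a b : ass_eqv (AScal c (AAdd a b)) (AAdd (AScal c a) (AScal c b))
| ae_scalA c d a : ass_eqv (AScal (c * d) a) (AScal c (AScal d a))
| ae_scal1 a : ass_eqv (AScal 1 a) a
| ae_scal0 a : ass_eqv (AScal 0 a) AZero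
| ae_mulA a b c : ass_eqv (AMul a (AMul b c)) (AMul (AMul a b) c)
| ae_mul1l a : ass_eqv (AMul AOne a) a
| ae_mul1r a : ass_eqv (AMul a AOne) a
| ae_mulDl a b c : ass_eqv (AMul (AAdd a b) c) (AAdd (AMul a c) (AMul b c))
| ae_mulDr a b c : ass_eqv (AMul a (AAdd b c)) (AAdd (AMul a b) (AMul a c))
| ae_mulZl c a b : ass_eqv (AMul (AScal c a) b) (AScal c (AMul a b))
| ae_mulZr c a b : ass_eqv (AMul a (AScal c b)) (AScal c (AMul a b))
| ae_ann g i a : ass_eqv (AScal (g * y i ^+ p) a) AZero
| ae_rel : ass_eqv (AScal (y i2) (AVar i2))
                   (AAdd (AScal (y i1) (AVar i1)) (AScal (y i0) (AVar i0))).

Fixpoint lie_to_ass (t : lterm) : aterm :=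
  match t with
  | LVar i => AVar i
  | LZero => AZero
  | LAdd a b => AAdd (lie_to_ass a) (lie_to_ass b)
  | LScal c a => AScal c (lie_to_ass a)
  | LBr a b => AAdd (AMul (lie_to_ass a) (lie_to_ass b))
                    (AScal (-1) (AMul (lie_to_ass b) (lie_to_ass a)))
  end.

Definition canonical_map_injective : Prop :=
  forall a b : lterm, ass_eqv (lie_to_ass a) (lie_to_ass b) -> lie_eqv a b.

End Presentations.

(* Main.v *)
Require Import Defs.
From mathcomp Require Import all_boot all_algebra.
From mathcomp Require Import mpoly.
From mathcomp Require Import ring.
Set Implicit Arguments. Unset Strict Implicit. Unset Printing Implicit Defensive.
Import GRing.Theory.
Local Open Scope ring_scope.

Section Model.
Variable k : fieldType.
Variable p : nat.
Local Notation P := {mpoly k[3]}.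

Record M := mkM { u1 : P; u2 : P; u3 : P; w12 : P; w13 : P; w23 : P;
  t112 : P; t113 : P; t123 : P; t212 : P; t213 : P; t223 : P;
  t312 : P; t313 : P; t323 : P }.

Definition mzero := mkM 0 0 0 0 0 0 0 0 0 0 0 0 0 0 0.
Definition madd m n := mkM (u1 m + u1 n) (u2 m + u2 n) (u3 m + u3 n)
  (w12 m + w12 n) (w13 m + w13 n) (w23 m + w23 n)
  (t112 m + t112 n) (t113 m + t113 n) (t123 m + t123 n)
  (t212 m + t212 n) (t213 m + t213 n) (t223 m + t223 n)
  (t312 m + t312 n) (t313 m + t313 n) (t323 m + t323 n).
Definition mscale (c : P) m := mkM (c * u1 m) (c * u2 m) (c * u3 m)
  (c * w12 m) (c * w13 m) (c * w23 m)
  (c * t112 m) (c * t113 m) (c * t123 m)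
  (c * t212 m) (c * t213 m) (c * t223 m)
  (c * t312 m) (c * t313 m) (c * t323 m).
Definition mbr m n := mkM 0 0 0
  (u1 m * u2 n - u2 m * u1 n) (u1 m * u3 n - u3 m * u1 n) (u2 m * u3 n - u3 m * u2 n)
  (u1 m * w12 n - u1 n * w12 m) (u1 m * w13 n - u1 n * w13 m) (u1 m * w23 n - u1 n * w23 m)
  (u2 m * w12 n - u2 n * w12 m) (u2 m * w13 n - u2 n * w13 m) (u2 m * w23 n - u2 n * w23 m)
  (u3 m * w12 n - u3 n * w12 m) (u3 m * w13 n - u3 n * w13 m) (u3 m * w23 n - u3 n * w23 m).
Definition msub m n := madd m (mscale (-1) n).
Definition evar (i : 'I_3) : M :=
  match nat_of_ord i with
  | 0 => mkM 1 0 0 0 0 0 0 0 0 0 0 0 0 0 0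
  | 1 => mkM 0 1 0 0 0 0 0 0 0 0 0 0 0 0 0
  | _ => mkM 0 0 1 0 0 0 0 0 0 0 0 0 0 0 0
  end.
Fixpoint interp (t : lterm k) : M :=
  match t with
  | LVar i => evar i
  | LZero => mzero
  | LAdd a b => madd (interp a) (interp b)
  | LScal c a => mscale c (interp a)
  | LBr a b => mbr (interp a) (interp b)
  end.

Variables g12 g13 g23 h112 h113 h123 h212 h213 h223 h312 h313 h323 : P.
Definition Psi m := g12 * w12 m + g13 * w13 m + g23 * w23 m
  + h112 * t112 m + h113 * t113 m + h123 * t123 m
  + h212 * t212 m + h213 * t213 m + h223 * t223 m
  + h312 * t312 m + h313 * t313 m + h323 * t323 m.

Local Notation Y1 := ('X_i0 : P).
Local Notation Y2 := ('X_i1 : P).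
Local Notation Y3 := ('X_i2 : P).

Hypothesis HJ : h123 - h213 + h312 = 0.
Hypothesis E12 : - Y1 * h112 - Y2 * h212 + Y3 * h312 = 0.
Hypothesis E13 : - Y1 * h113 - Y2 * h213 + Y3 * h313 = 0.
Hypothesis E23 : - Y1 * h123 - Y2 * h223 + Y3 * h323 = 0.
Hypothesis F1 : Y2 * g12 - Y3 * g13 = 0.
Hypothesis F2 : - Y1 * g12 - Y3 * g23 = 0.
Hypothesis F3 : - Y1 * g13 - Y2 * g23 = 0.
Hypothesis G11 : Y2 * h112 - Y3 * h113 = 0.
Hypothesis G12 : - Y1 * h112 - Y3 * h123 = 0.
Hypothesis G13 : - Y1 * h113 - Y2 * h123 = 0.
Hypothesis G21 : Y2 * h212 - Y3 * h213 = 0.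
Hypothesis G22 : - Y1 * h212 - Y3 * h223 = 0.
Hypothesis G23 : - Y1 * h213 - Y2 * h223 = 0.
Hypothesis G31 : Y2 * h312 - Y3 * h313 = 0.
Hypothesis G32 : - Y1 * h312 - Y3 * h323 = 0.
Hypothesis G33 : - Y1 * h313 - Y2 * h323 = 0.

Definition Iid (f : P) := exists q1 q2 q3 : P,
  f = Y1 ^+ p * q1 + Y2 ^+ p * q2 + Y3 ^+ p * q3.

Lemma Iid0 : Iid 0.
Proof. by exists 0, 0, 0; rewrite !mulr0 !addr0. Qed.
Lemma Iid_eq0 f : f = 0 -> Iid f.
Proof. by move->; exact: Iid0. Qed.
Lemma IidD f g : Iid f -> Iid g -> Iid (f + g).
Proof.
move=> [a1 [a2 [a3 ->]]] [b1 [b2 [b3 ->]]].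
by exists (a1 + b1), (a2 + b2), (a3 + b3); ring.
Qed.
Lemma IidM c f : Iid f -> Iid (c * f).
Proof. by move=> [a1 [a2 [a3 ->]]]; exists (c * a1), (c * a2), (c * a3); ring. Qed.
Lemma IidX (i : 'I_3) f : Iid ('X_i ^+ p * f).
Proof.
have : i = i0 \/ i = i1 \/ i = i2.
  case: i => [[|[|[|m]]] Hm]; [left|right;left|right;right|by []];
  by apply: val_inj.
case=> [->|[->|->]].
- by exists f, 0, 0; ring.
- by exists 0, f, 0; ring.
- by exists 0, 0, f; ring.
Qed.

Definition Q m := forall n1 n2,
  Iid (Psi m) /\ Iid (Psi (mbr m n1)) /\ Iid (Psi (mbr (mbr m n1) n2)).

#[global] Arguments Psi m /.
#[global] Arguments msub m n /.
#[global] Arguments mbr m n /.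
#[global] Arguments madd m n /.
#[global] Arguments mscale c m /.
#[global] Arguments mzero /.
Ltac unf := cbn [interp evar nat_of_ord i0 i1 i2];
  repeat match goal with |- context [interp ?x] => generalize (interp x); intro end;
  cbn [Psi msub mbr madd mscale mzero u1 u2 u3 w12 w13 w23 t112 t113 t123 t212 t213 t223 t312 t313 t323].

Lemma Q_eq0 x : (forall n1 n2, Psi x = 0 /\ Psi (mbr x n1) = 0
   /\ Psi (mbr (mbr x n1) n2) = 0) -> Q x.
Proof.
move=> H n1 n2; have [h1 [h2 h3]] := H n1 n2.
by split; [|split]; apply: Iid_eq0.
Qed.

Ltac zcase := apply: Q_eq0 => n1 n2; unf; split; [|split]; ring.

Lemma interp_sound a b : lie_eqv p a b -> Q (msub (interp a) (interp b)).
Proof.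
elim=> {a b}.
- move=> a; zcase.
- move=> a b _ IH n1 n2; have [h1 [h2 h3]] := IH n1 n2.
  split; [|split].
  + rewrite (_ : Psi _ = (-1) * Psi (msub (interp a) (interp b))); last by unf; ring.
    exact: IidM.
  + rewrite (_ : Psi _ = (-1) * Psi (mbr (msub (interp a) (interp b)) n1)); last by unf; ring.
    exact: IidM.
  + rewrite (_ : Psi _ = (-1) * Psi (mbr (mbr (msub (interp a) (interp b)) n1) n2)); last by unf; ring.
    exact: IidM.
- move=> a b c _ IH1 _ IH2 n1 n2.
  have [h1 [h2 h3]] := IH1 n1 n2; have [h1' [h2' h3']] := IH2 n1 n2.
  split; [|split].
  + rewrite (_ : Psi _ = Psi (msub (interp a) (interp b)) + Psi (msub (interp b) (interp c))); last by unf; ring.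
    exact: IidD.
  + rewrite (_ : Psi _ = Psi (mbr (msub (interp a) (interp b)) n1) + Psi (mbr (msub (interp b) (interp c)) n1)); last by unf; ring.
    exact: IidD.
  + rewrite (_ : Psi _ = Psi (mbr (mbr (msub (interp a) (interp b)) n1) n2) + Psi (mbr (mbr (msub (interp b) (interp c)) n1) n2)); last by unf; ring.
    exact: IidD.
- move=> a a' b b' _ IH1 _ IH2 n1 n2.
  have [h1 [h2 h3]] := IH1 n1 n2; have [h1' [h2' h3']] := IH2 n1 n2.
  split; [|split].
  + rewrite (_ : Psi _ = Psi (msub (interp a) (interp a')) + Psi (msub (interp b) (interp b'))); last by unf; ring.
    exact: IidD.
  + rewrite (_ : Psi _ = Psi (mbr (msub (interp a) (interp a')) n1) + Psi (mbr (msub (interp b) (interp b')) n1)); last by unf; ring.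
    exact: IidD.
  + rewrite (_ : Psi _ = Psi (mbr (mbr (msub (interp a) (interp a')) n1) n2) + Psi (mbr (mbr (msub (interp b) (interp b')) n1) n2)); last by unf; ring.
    exact: IidD.
- move=> c a a' _ IH n1 n2; have [h1 [h2 h3]] := IH n1 n2.
  split; [|split].
  + rewrite (_ : Psi _ = c * Psi (msub (interp a) (interp a'))); last by unf; ring.
    exact: IidM.
  + rewrite (_ : Psi _ = c * Psi (mbr (msub (interp a) (interp a')) n1)); last by unf; ring.
    exact: IidM.
  + rewrite (_ : Psi _ = c * Psi (mbr (mbr (msub (interp a) (interp a')) n1) n2)); last by unf; ring.
    exact: IidM.
- move=> a a' b b' _ IH1 _ IH2 n1 n2.
  have [h1 [h2 h3]] := IH1 (interp b) n1; have [h1' [h2' h3']] := IH2 (interp a') n1.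
  split; [|split].
  + rewrite (_ : Psi _ = Psi (mbr (msub (interp a) (interp a')) (interp b)) + (-1) * Psi (mbr (msub (interp b) (interp b')) (interp a'))); last by unf; ring.
    by apply: IidD => //; apply: IidM.
  + rewrite (_ : Psi _ = Psi (mbr (mbr (msub (interp a) (interp a')) (interp b)) n1) + (-1) * Psi (mbr (mbr (msub (interp b) (interp b')) (interp a')) n1)); last by unf; ring.
    by apply: IidD => //; apply: IidM.
  + apply: Iid_eq0; unf; ring.
- move=> a b c; zcase.
- move=> a b; zcase.
- move=> a; zcase.
- move=> c d a; zcase.
- move=> c a b; zcase.
- move=> c d a; zcase.
- move=> a; zcase.
- move=> a; zcase.
- move=> a b c; zcase.
- move=> a b c; zcase.
- move=> c a b; zcase.
- move=> c a b; zcase.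
- move=> a; zcase.
- move=> a b c; apply: Q_eq0 => n1 n2; split; [|split]; last by unf; ring.
  + rewrite (_ : Psi _ = (u1 (interp a) * (u2 (interp b) * u3 (interp c) - u3 (interp b) * u2 (interp c)) - u2 (interp a) * (u1 (interp b) * u3 (interp c) - u3 (interp b) * u1 (interp c))
       + u3 (interp a) * (u1 (interp b) * u2 (interp c) - u2 (interp b) * u1 (interp c))) * (h123 - h213 + h312)); first by rewrite HJ mulr0.
    by unf; ring.
  + by unf; ring.
- move=> g i a n1 n2; split; [|split].
  + rewrite (_ : Psi _ = 'X_i ^+ p * (g * Psi (interp a))); last by unf; ring.
    exact: IidX.
  + rewrite (_ : Psi _ = 'X_i ^+ p * (g * Psi (mbr (interp a) n1))); last by unf; ring.
    exact: IidX.
  + rewrite (_ : Psi _ = 'X_i ^+ p * (g * Psi (mbr (mbr (interp a) n1) n2))); last by unf; ring.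
    exact: IidX.
- apply: Q_eq0 => n1 n2; split; [|split].
  + by unf; ring.
  + rewrite (_ : Psi _ = w12 n1 * (- Y1 * h112 - Y2 * h212 + Y3 * h312)
       + w13 n1 * (- Y1 * h113 - Y2 * h213 + Y3 * h313)
       + w23 n1 * (- Y1 * h123 - Y2 * h223 + Y3 * h323)
       + u1 n1 * (Y2 * g12 - Y3 * g13) + u2 n1 * (- Y1 * g12 - Y3 * g23)
       + u3 n1 * (- Y1 * g13 - Y2 * g23)); last by unf; ring.
    by rewrite E12 E13 E23 F1 F2 F3; ring.
  + rewrite (_ : Psi _ = - (u1 n2 * (u1 n1 * (Y2 * h112 - Y3 * h113) + u2 n1 * (- Y1 * h112 - Y3 * h123) + u3 n1 * (- Y1 * h113 - Y2 * h123))
       + u2 n2 * (u1 n1 * (Y2 * h212 - Y3 * h213) + u2 n1 * (- Y1 * h212 - Y3 * h223) + u3 n1 * (- Y1 * h213 - Y2 * h223))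
       + u3 n2 * (u1 n1 * (Y2 * h312 - Y3 * h313) + u2 n1 * (- Y1 * h312 - Y3 * h323) + u3 n1 * (- Y1 * h313 - Y2 * h323)))); last by unf; ring.
    by rewrite G11 G12 G13 G21 G22 G23 G31 G32 G33; ring.
Qed.

End Model.

Section Norm.
Variable k : fieldType.
Variable p : nat.
Local Notation P := {mpoly k[3]}.
Local Notation A := (aterm k).
Local Notation "a ≈ b" := (ass_eqv p a b) (at level 70).

Lemma aeR (a b : A) : a = b -> a ≈ b. Proof. by move->; exact: (ae_refl p). Qed.
Lemma add0l (x : A) : AAdd (AZero k) x ≈ x.
Proof. exact: ae_trans ((ae_addC p) _ _) ((ae_add0 p) _). Qed.
Lemma addAC (a b c : A) : AAdd a (AAdd b c) ≈ AAdd b (AAdd a c).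
Proof.
apply: ae_trans ((ae_addA p) _ _ _) _.
apply: ae_trans (ae_add ((ae_addC p) _ _) ((ae_refl p) _)) _.
exact: ae_sym ((ae_addA p) _ _ _).
Qed.
Lemma scal_zero (c : P) : AScal c (AZero k) ≈ AZero k.
Proof.
apply: ae_trans (ae_scal c (ae_sym ((ae_scal0 p) (AZero k)))) _.
apply: ae_trans (ae_sym ((ae_scalA p) _ _ _)) _.
rewrite mulr0; exact: (ae_scal0 p).
Qed.
Lemma mul0l (x : A) : AMul (AZero k) x ≈ AZero k.
Proof.
apply: ae_trans (ae_mul (ae_sym ((ae_scal0 p) (AZero k))) ((ae_refl p) x)) _.
apply: ae_trans ((ae_mulZl p) _ _ _) _; exact: (ae_scal0 p).
Qed.
Lemma mul0r (x : A) : AMul x (AZero k) ≈ AZero k.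
Proof.
apply: ae_trans (ae_mul ((ae_refl p) x) (ae_sym ((ae_scal0 p) (AZero k)))) _.
apply: ae_trans ((ae_mulZr p) _ _ _) _; exact: (ae_scal0 p).
Qed.

Definition Mon := (P * seq nat)%type.
Definition wordA (w : seq nat) : A :=
  foldr (fun i acc => AMul (AVar k (inord i)) acc) (AOne k) w.
Definition reify (l : seq Mon) : A :=
  foldr (fun m acc => AAdd (AScal m.1 (wordA m.2)) acc) (AZero k) l.
Fixpoint mulnf (l1 l2 : seq Mon) : seq Mon :=
  match l1 with
  | [::] => [::]
  | m1 :: l1' => map (fun m2 => (m1.1 * m2.1, m1.2 ++ m2.2)) l2 ++ mulnf l1' l2
  end.
Fixpoint nf (t : A) : seq Mon :=
  match t with
  | AVar i => [:: (1, [:: nat_of_ord i])]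
  | AZero => [::]
  | AOne => [:: (1, [::])]
  | AAdd a b => nf a ++ nf b
  | AScal c a => map (fun m => (c * m.1, m.2)) (nf a)
  | AMul a b => mulnf (nf a) (nf b)
  end.

Lemma reify_cat l1 l2 : reify (l1 ++ l2) ≈ AAdd (reify l1) (reify l2).
Proof.
elim: l1 => [|m l1 IH] /=; first exact: ae_sym (add0l _).
apply: ae_trans (ae_add ((ae_refl p) _) IH) _; exact: (ae_addA p).
Qed.
Lemma reify_scale c l : reify (map (fun m => (c * m.1, m.2)) l) ≈ AScal c (reify l).
Proof.
elim: l => [|m l IH] /=; first exact: ae_sym (scal_zero c).
apply: ae_trans _ (ae_sym ((ae_scalDr p) _ _ _)).
apply: ae_add IH; exact: (ae_scalA p).
Qed.
Lemma wordA_cat w1 w2 : wordA (w1 ++ w2) ≈ AMul (wordA w1) (wordA w2).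
Proof.
elim: w1 => [|i w1 IH] /=; first exact: ae_sym ((ae_mul1l p) _).
apply: ae_trans (ae_mul ((ae_refl p) _) IH) _; exact: (ae_mulA p).
Qed.
Lemma reify_mul1 c w l :
  reify (map (fun m2 => (c * m2.1, w ++ m2.2)) l) ≈ AMul (AScal c (wordA w)) (reify l).
Proof.
elim: l => [|m l IH] /=; first exact: ae_sym (mul0r _).
apply: ae_trans _ (ae_sym ((ae_mulDr p) _ _ _)).
apply: ae_add IH.
apply: ae_trans ((ae_scalA p) _ _ _) _.
apply: ae_trans (ae_scal c (ae_scal m.1 (wordA_cat w m.2))) _.
apply: ae_trans _ (ae_sym ((ae_mulZl p) _ _ _)).
apply: ae_scal; exact: ae_sym ((ae_mulZr p) _ _ _).
Qed.
Lemma reify_mul l1 l2 : reify (mulnf l1 l2) ≈ AMul (reify l1) (reify l2).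
Proof.
elim: l1 => [|m l1 IH] /=; first exact: ae_sym (mul0l _).
apply: ae_trans (reify_cat _ _) _.
apply: ae_trans _ (ae_sym ((ae_mulDl p) _ _ _)).
exact: ae_add (reify_mul1 _ _ _) IH.
Qed.
Lemma nf_sound t : t ≈ reify (nf t).
Proof.
elim: t => [i||| a IHa b IHb | c a IHa | a IHa b IHb] /=.
- rewrite inord_val; apply: ae_sym; apply: ae_trans ((ae_add0 p) _) _.
  apply: ae_trans ((ae_scal1 p) _) _; exact: (ae_mul1r p).
- exact: (ae_refl p).
- apply: ae_sym; apply: ae_trans ((ae_add0 p) _) _; exact: (ae_scal1 p).
- apply: ae_trans _ (ae_sym (reify_cat _ _)); exact: ae_add.
- apply: ae_trans _ (ae_sym (reify_scale _ _)); exact: ae_scal.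
- apply: ae_trans _ (ae_sym (reify_mul _ _)); exact: ae_mul.
Qed.

Definition reifyS (S : seq (seq nat)) (f : seq nat -> P) : A :=
  foldr (fun w acc => AAdd (AScal (f w) (wordA w)) acc) (AZero k) S.
Definition coef (l : seq Mon) (w : seq nat) : P :=
  foldr (fun m acc => (if m.2 == w then m.1 else 0) + acc) 0 l.

Lemma reifyS0 S : reifyS S (fun _ => 0) ≈ AZero k.
Proof.
elim: S => [|w S IH] /=; first exact: (ae_refl p).
apply: ae_trans (ae_add ((ae_scal0 p) _) IH) _; exact: (ae_add0 p).
Qed.
Lemma reifyS_eq S f g : {in S, f =1 g} -> reifyS S f = reifyS S g.
Proof.
elim: S => [|w S IH] //= H.
rewrite H ?mem_head // IH // => x xS; apply: H; by rewrite inE xS orbT.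
Qed.
Lemma reifyS_add S w0 c f : uniq S -> w0 \in S ->
  reifyS S (fun w => (if w0 == w then c else 0) + f w) ≈ AAdd (AScal c (wordA w0)) (reifyS S f).
Proof.
elim: S => [|w S IH] //= /andP [wS uS]; rewrite inE.
have [->|ne] := eqVneq w0 w => /= H.
- rewrite (reifyS_eq (g := f)); last first.
    move=> x xS /=; have -> : (w == x) = false by apply/negbTE; apply: contraNneq wS => ->.
    by rewrite add0r.
  apply: ae_trans (ae_add ((ae_scalDl p) _ _ _) ((ae_refl p) _)) _.
  exact: ae_sym ((ae_addA p) _ _ _).
- rewrite add0r; apply: ae_trans (ae_add ((ae_refl p) _) (IH uS H)) _; exact: addAC.
Qed.
Lemma reify_collect l S : uniq S -> all (fun m => m.2 \in S) l -> reify l ≈ reifyS S (coef l).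
Proof.
move=> uS; elim: l => [|m l IH] /=; first by move=> _; exact: ae_sym (reifyS0 S).
case/andP=> mS lS.
apply: ae_trans (ae_add ((ae_refl p) _) (IH lS)) _.
exact: ae_sym (reifyS_add _ _ uS mS).
Qed.

Fixpoint allS (S : seq (seq nat)) (Pr : seq nat -> Prop) : Prop :=
  match S with [::] => True | w :: S' => Pr w /\ allS S' Pr end.
Lemma allS_in S Pr : allS S Pr -> forall w, w \in S -> Pr w.
Proof.
elim: S => [|w S IH] //= [Hw HS] x; rewrite inE; case/orP=> [/eqP->//|]; exact: IH.
Qed.

Lemma nf_eq t1 t2 S : uniq S -> all (fun m => m.2 \in S) (nf t1) ->
  all (fun m => m.2 \in S) (nf t2) ->
  allS S (fun w => coef (nf t1) w = coef (nf t2) w) -> t1 ≈ t2.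
Proof.
move=> uS h1 h2 hc.
apply: ae_trans (nf_sound t1) _; apply: ae_trans _ (ae_sym (nf_sound t2)).
apply: ae_trans (reify_collect uS h1) _; apply: ae_trans _ (ae_sym (reify_collect uS h2)).
rewrite (reifyS_eq (g := coef (nf t2))); first exact: (ae_refl p).
exact: allS_in hc.
Qed.

End Norm.

Section U.
Variable k : fieldType.
Local Notation P := {mpoly k[3]}.
Definition la : lterm k := LScal ('X_i1) (LVar k i1).
Definition lb : lterm k := LScal ('X_i0) (LVar k i0).
Definition Lam2 := LBr la lb.
Definition Lam3 := LAdd (LBr lb (LBr lb la)) (LScal (-1) (LBr la (LBr lb la))).
Definition Aa : aterm k := AScal 'X_i1 (AVar k i1).
Definition Bb : aterm k := AScal 'X_i0 (AVar k i0).
Definition Cc : aterm k := AScal 'X_i2 (AVar k i2).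
Definition R2 := AAdd (AMul (AAdd Aa Bb) (AAdd Aa Bb)) (AAdd (AScal (-1) (AMul Aa Aa))
   (AAdd (AScal (-1) (AMul Bb Bb)) (AScal 2%:R (AScal (-1) (AMul Bb Aa))))).
Definition cube (x : aterm k) := AMul x (AMul x x).
Definition R3 := AAdd (cube (AAdd Aa Bb)) (AAdd (AScal (-1) (cube Aa))
   (AAdd (AScal (-1) (cube Bb)) (AScal 3%:R (AAdd (AScal (-1) (AMul Bb (AMul Aa Bb)))
        (AScal (-1) (AMul Aa (AMul Bb Aa))))))).

Variable p : nat.
Local Notation "a ≈ b" := (ass_eqv p a b) (at level 70).

Lemma sqS (y : P) v : AMul (AScal y v) (AScal y v) ≈ AScal (y * y) (AMul v v).
Proof.
apply: ae_trans (ae_mulZl p _ _ _) _.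
apply: ae_trans (ae_scal y (ae_mulZr p _ _ _)) _.
exact: ae_sym (ae_scalA p _ _ _).
Qed.
Lemma cubeS (y : P) v : cube (AScal y v) ≈ AScal (y * (y * y)) (AMul v (AMul v v)).
Proof.
apply: ae_trans (ae_mul (ae_refl p _) (sqS y v)) _.
apply: ae_trans (ae_mulZl p _ _ _) _.
apply: ae_trans (ae_scal y (ae_mulZr p _ _ _)) _.
exact: ae_sym (ae_scalA p _ _ _).
Qed.
Lemma sq0 (i : 'I_3) v : p = 2%N -> AMul (AScal 'X_i v) (AScal 'X_i v) ≈ AZero k.
Proof.
move=> hp; apply: ae_trans (sqS _ _) _.
have -> : ('X_i * 'X_i : P) = 1 * 'X_i ^+ p by rewrite hp; ring.
exact: ae_ann.
Qed.
Lemma cube0 (i : 'I_3) v : p = 3%N -> cube (AScal 'X_i v) ≈ AZero k.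
Proof.
move=> hp; apply: ae_trans (cubeS _ _) _.
have -> : ('X_i * ('X_i * 'X_i) : P) = 1 * 'X_i ^+ p by rewrite hp; ring.
exact: ae_ann.
Qed.

Lemma U2 : p = 2%N -> (2%:R : P) = 0 -> lie_to_ass Lam2 ≈ AZero k.
Proof.
move=> hp h2.
apply: (@ae_trans _ _ _ R2).
  apply: (@nf_eq _ _ _ _ [:: [:: 1; 1]; [:: 1; 0]; [:: 0; 1]; [:: 0; 0]]%N) => //=.
  by do ! split; ring.
have E1 : AMul (AAdd Aa Bb) (AAdd Aa Bb) ≈ AZero k.
  apply: ae_trans (ae_mul (ae_sym (ae_rel k p)) (ae_sym (ae_rel k p))) _.
  exact: sq0.
have E2 : AScal (-1) (AMul Aa Aa) ≈ AZero k.
  apply: ae_trans (ae_scal _ (sq0 _ _ hp)) _; exact: scal_zero.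
have E3 : AScal (-1) (AMul Bb Bb) ≈ AZero k.
  apply: ae_trans (ae_scal _ (sq0 _ _ hp)) _; exact: scal_zero.
have E4 : AScal 2%:R (AScal (-1) (AMul Bb Aa)) ≈ AZero k.
  rewrite h2; exact: ae_scal0.
rewrite /R2; apply: ae_trans (ae_add E1 (ae_add E2 (ae_add E3 E4))) _.
apply: ae_trans (add0l _ _) _; apply: ae_trans (add0l _ _) _; exact: add0l.
Qed.

Lemma U3 : p = 3%N -> (3%:R : P) = 0 -> lie_to_ass Lam3 ≈ AZero k.
Proof.
move=> hp h3.
apply: (@ae_trans _ _ _ R3).
  apply: (@nf_eq _ _ _ _ [:: [:: 1; 1; 1]; [:: 1; 1; 0]; [:: 1; 0; 1]; [:: 1; 0; 0];
      [:: 0; 1; 1]; [:: 0; 1; 0]; [:: 0; 0; 1]; [:: 0; 0; 0]]%N) => //=.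
  by do ! split; ring.
have E1 : cube (AAdd Aa Bb) ≈ AZero k.
  apply: ae_trans (ae_mul (ae_sym (ae_rel k p))
     (ae_mul (ae_sym (ae_rel k p)) (ae_sym (ae_rel k p)))) _.
  exact: cube0.
have E2 : AScal (-1) (cube Aa) ≈ AZero k.
  apply: ae_trans (ae_scal _ (cube0 _ _ hp)) _; exact: scal_zero.
have E3 : AScal (-1) (cube Bb) ≈ AZero k.
  apply: ae_trans (ae_scal _ (cube0 _ _ hp)) _; exact: scal_zero.
have E4 : AScal 3%:R (AAdd (AScal (-1) (AMul Bb (AMul Aa Bb)))
        (AScal (-1) (AMul Aa (AMul Bb Aa)))) ≈ AZero k.
  rewrite h3; exact: ae_scal0.
rewrite /R3; apply: ae_trans (ae_add E1 (ae_add E2 (ae_add E3 E4))) _.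
apply: ae_trans (add0l _ _) _; apply: ae_trans (add0l _ _) _; exact: add0l.
Qed.
End U.

Lemma mcoeff_vanish (k : fieldType) (n : nat) (m : 'X_{1..3}) (i : 'I_3) (q : {mpoly k[3]}) :
  (m i < n)%N -> ('X_i ^+ n * q)@_m = 0.
Proof.
move=> lt; rewrite mulrC mpolyXn mcoeffM big1 // => kk /eqP Hm.
rewrite mcoeffX; case: eqP => [E|_]; last by rewrite mulr0.
have H := congr1 (fun mm : 'X_{1..3} => mm i) Hm.
move: lt; rewrite /= in H; rewrite H mnmDE -E mulmnE mnm1E eqxx mul1n.
by rewrite ltnNge leq_addl.
Qed.

Definition mu1 : 'X_{1..3} := (U_(i0) + U_(i1) + U_(i2))%MM.
Lemma mu1E j : mu1 j = 1%N.
Proof.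
rewrite /mu1 !mnmDE !mnm1E.
by case: j => [[|[|[|m]]] Hm] //.
Qed.

Ltac unf2 := cbn [interp evar nat_of_ord i0 i1 i2 Lam2 Lam3 la lb];
  cbn [Psi msub mbr madd mscale mzero u1 u2 u3 w12 w13 w23 t112 t113 t123 t212 t213 t223 t312 t313 t323].

Theorem mainTheorem12 (p : nat) (k : fieldType) :
  (p = 2 \/ p = 3)%N -> p \in [pchar k]%R ->
  ~ canonical_map_injective k p.
Proof.
move=> hp hc inj.
have hP : (p%:R : {mpoly k[3]}) = 0.
  by rewrite -mpolyC_nat (pcharf0 hc) mpolyC0.
case: hp => hp; subst p.
- have HL := inj _ _ (U2 (erefl 2%N) hP : ass_eqv 2 (lie_to_ass (Lam2 k)) (lie_to_ass (LZero k))).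
  have HQ := interp_sound (k := k) (p := 2) (g12 := 'X_i2) (g13 := 'X_i1) (g23 := - 'X_i0)
    (h112 := 0) (h113 := 0) (h123 := 0) (h212 := 0) (h213 := 0) (h223 := 0)
    (h312 := 0) (h313 := 0) (h323 := 0)
    ltac:(ring) ltac:(ring) ltac:(ring) ltac:(ring) ltac:(ring) ltac:(ring) ltac:(ring)
    ltac:(ring) ltac:(ring) ltac:(ring) ltac:(ring) ltac:(ring) ltac:(ring)
    ltac:(ring) ltac:(ring) ltac:(ring) HL.
  have [[q1 [q2 [q3 E]]] _] := HQ (mzero k) (mzero k).
  move: E; unf2.
  move=> E.
  have E' : - 'X_[mu1] = 'X_i0 ^+ 2 * q1 + 'X_i1 ^+ 2 * q2 + 'X_i2 ^+ 2 * q3.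
    by rewrite -E /mu1 !mpolyXD; ring.
  move: (congr1 (mcoeff mu1) E').
  rewrite mcoeffN mcoeffX eqxx !mcoeffD !mcoeff_vanish ?mu1E // !addr0 => /eqP.
  by rewrite oppr_eq0 oner_eq0.
- have HL := inj _ _ (U3 (erefl 3%N) hP : ass_eqv 3 (lie_to_ass (Lam3 k)) (lie_to_ass (LZero k))).
  have HQ := interp_sound (k := k) (p := 3) (g12 := 0) (g13 := 0) (g23 := 0)
    (h112 := 'X_i1 * 'X_i2 ^+ 2) (h113 := 'X_i1 ^+ 2 * 'X_i2) (h123 := - ('X_i0 * 'X_i1 * 'X_i2))
    (h212 := - ('X_i0 * 'X_i2 ^+ 2)) (h213 := - ('X_i0 * 'X_i1 * 'X_i2)) (h223 := 'X_i0 ^+ 2 * 'X_i2)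
    (h312 := 0) (h313 := 0) (h323 := 0)
    ltac:(ring) ltac:(ring) ltac:(ring) ltac:(ring) ltac:(ring) ltac:(ring) ltac:(ring)
    ltac:(ring) ltac:(ring) ltac:(ring) ltac:(ring) ltac:(ring) ltac:(ring)
    ltac:(ring) ltac:(ring) ltac:(ring) HL.
  have [[q1 [q2 [q3 E]]] _] := HQ (mzero k) (mzero k).
  move: E; unf2 => E.
  have E' : 'X_[mu1 *+ 2] *+ 2 = 'X_i0 ^+ 3 * q1 + 'X_i1 ^+ 3 * q2 + 'X_i2 ^+ 3 * q3.
    by rewrite -E -mpolyXn /mu1 !mpolyXD; ring.
  move: (congr1 (mcoeff (mu1 *+ 2)) E').
  rewrite mcoeffMn mcoeffX eqxx !mcoeffD !mcoeff_vanish ?mulmnE ?mu1E // !addr0 => /eqP.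
  have h3 : (3%:R : k) = 0 := pcharf0 hc.
  move: h3; rewrite (_ : 3%N = 2 + 1)%N // natrD => h3 h2.
  have : (2%:R : k) = 0 by apply/eqP.
  by move=> h2'; move: h3; rewrite h2' add0r => /eqP; rewrite oner_eq0.
Qed.
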